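(* For every graph $G$ and every connected subgraph $H\subseteq G$, $$R_3(G)\geqslant (\chi(H)-1)(R_2(H)-1)+1.$$
   Context: For a graph $G$ and integer $r\geqslant 2$, the $r$-colour Ramsey number $R_r(G)$ is the smallest integer $N$ such that every colouring of the edges of $K_N$ with $r$ colours contains a monochromatic copy of $G$. $\chi(H)$ denotes the chromatic number of $H$. *)

(* Defs.v *)
From Stdlib Require Import ClassicalEpsilon.
From mathcomp Require Import all_boot.
Set Implicit Arguments. Unset Strict Implicit. Unset Printing Implicit Defensive.

Definition simple_graph (V : finType) (e : rel V) : Prop :=
  symmetric e /\ irreflexive e.

(* H (on VH, eH) is a subgraph of G (on VG, eG), up to isomorphism:
   an injective vertex map sending edges to edges *)
Definition subgraph_via (VH VG : finType) (eH : rel VH) (eG : rel VG)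
    (phi : VH -> VG) : Prop :=
  injective phi /\ forall u v, eH u v -> eG (phi u) (phi v).

Definition connected_graph (V : finType) (e : rel V) : Prop :=
  0 < #|V| /\ forall u v : V, connect e u v.

(* least natural number satisfying P (0 if none exists; used only for
   predicates known to be eventually satisfied) *)
Definition classical_min (P : pred nat) : nat :=
  match excluded_middle_informative (exists n, P n) with
  | left h => ex_minn h
  | right _ => 0
  end.

Definition k_colourable (V : finType) (e : rel V) (k : nat) : bool :=
  [exists f : {ffun V -> 'I_k}, [forall u, forall v, e u v ==> (f u != f v)]].

Definition chi (V : finType) (e : rel V) : nat := classical_min (k_colourable e).

(* every r-colouring of the edges of K_N (a colouring c of ordered pairs that
   is symmetric on pairs of distinct vertices; only those values matter)
   contains a monochromatic copy of G *)
Definition ramsey_prop (r : nat) (V : finType) (e : rel V) (N : nat) : bool :=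
  [forall c : {ffun 'I_N * 'I_N -> 'I_r},
     [forall x, forall y, (x != y) ==> (c (x, y) == c (y, x))] ==>
     [exists col : 'I_r, exists f : {ffun V -> 'I_N},
        injectiveb f && [forall u, forall v, e u v ==> (c (f u, f v) == col)]]].

Definition ramsey (r : nat) (V : finType) (e : rel V) : nat :=
  classical_min (ramsey_prop r e).

(* Main.v *)
Require Import Defs.
From Stdlib Require Import ClassicalEpsilon.
From mathcomp Require Import all_boot zify.
Set Implicit Arguments. Unset Strict Implicit. Unset Printing Implicit Defensive.

Lemma cmin_spec (P : pred nat) : (exists n, P n) ->
  P (classical_min P) /\ forall n, P n -> classical_min P <= n.
Proof.
move=> ex; rewrite /classical_min; case: excluded_middle_informative => [h|//].
by case: ex_minnP => m Pm Hm; split.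
Qed.

Lemma cmin_lt (P : pred nat) n : n < classical_min P -> ~~ P n.
Proof.
rewrite /classical_min; case: excluded_middle_informative => [h|//].
case: ex_minnP => m Pm Hm lt; apply/negP => Pn.
by have := Hm _ Pn; rewrite leqNgt lt.
Qed.

Section Gen.
Variables (T : finType) (r : nat) (c : T -> T -> 'I_r).
Hypothesis csym : forall x y, x != y -> c x y = c y x.
Hypothesis r2 : 1 < r.

Definition mono (A : {set T}) (j : 'I_r) :=
  forall x y, x \in A -> y \in A -> x != y -> c x y = j.

Lemma card_split (v : T) (B : {set T}) :
  #|B| = \sum_(j < r) #|[set y in B | c v y == j]|.
Proof.
rewrite -sum1_card (partition_big (c v) predT) //=.
apply: eq_bigr => j _; rewrite -sum1_card; apply: eq_bigl => y.
by rewrite inE.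
Qed.

Lemma ramsey_gen n : forall (a : 'I_r -> nat) (S : {set T}),
  \sum_i a i = n -> r ^ n <= #|S| ->
  exists j : 'I_r, exists2 A : {set T}, A \subset S & (mono A j /\ a j < #|A|).
Proof.
have r0 : 0 < r by lia.
have [v0 _ | ] := pickP (fun x : T => true); last first.
  move=> none a S _; have: r ^ n > 0 by rewrite expn_gt0 r0.
  suff -> : #|S| = 0 by lia.
  by apply/eqP; rewrite cards_eq0; apply/eqP/setP => x; have := none x.
elim: n => [|m IH] a S suma hS.
  have Sn : 0 < #|S| by rewrite expn0 in hS.
  case/card_gt0P: Sn => v vS.
  exists (Ordinal r0), [set v]; first by rewrite sub1set.
  split; first by move=> x y; rewrite !inE => /eqP -> /eqP ->; rewrite eqxx.
  have : a (Ordinal r0) <= \sum_i a i by rewrite (bigD1 (Ordinal r0)) //= leq_addr.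
  by rewrite suma cards1; lia.
have Sn : 0 < #|S| by have := expn_gt0 r m.+1; lia.
case/card_gt0P: Sn => v vS.
case: (boolP [exists j, a j == 0]) => [/existsP [j /eqP aj0] | /existsPn allpos].
  exists j, [set v]; first by rewrite sub1set.
  split; first by move=> x y; rewrite !inE => /eqP -> /eqP ->; rewrite eqxx.
  by rewrite aj0 cards1.
pose Sj (j : 'I_r) := [set y in S :\ v | c v y == j].
have [j hj] : exists j, r ^ m <= #|Sj j|.
  apply/existsP; apply: contraT => /existsPn hn.
  have hsum := card_split v (S :\ v).
  have : \sum_(j < r) #|Sj j| <= \sum_(j < r) (r ^ m).-1.
    apply: leq_sum => j _; have := hn j; rewrite -ltnNge; have := expn_gt0 r m; lia.
  rewrite -hsum sum_nat_const card_ord.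
  have := cardsD1 v S; rewrite vS /=.
  rewrite expnS in hS; have := expn_gt0 r m; set P := r ^ m; nia.
pose a' := fun i => if i == j then (a i).-1 else a i.
have ajp : 0 < a j by have := allpos j; case: (a j).
have suma' : \sum_i a' i = m.
  have e1 : \sum_i a i = a j + \sum_(i | i != j) a i by rewrite (bigD1 j).
  have e2 : \sum_i a' i = a' j + \sum_(i | i != j) a' i by rewrite (bigD1 j).
  have e3 : \sum_(i | i != j) a' i = \sum_(i | i != j) a i.
    by apply: eq_bigr => i /negPf; rewrite /a' => ->.
  rewrite e2 e3 /a' eqxx; lia.
have [j' [A sA [mA aA]]] := IH a' (Sj j) suma' hj.
have AS : A \subset S.
  apply: subset_trans sA _; apply/subsetP => y; rewrite /Sj !inE; by case/andP => /andP [].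
case: (eqVneq j' j) => [ejj | nj].
  subst j'; exists j, (v |: A).
    by rewrite subUset sub1set vS AS.
  have vA : v \notin A.
    apply/negP => /(subsetP sA); by rewrite /Sj !inE eqxx.
  split; last first.
    by rewrite cardsU1 vA /=; move: aA; rewrite /a' eqxx; lia.
  have cv : forall y, y \in A -> c v y = j.
    by move=> y /(subsetP sA); rewrite /Sj !inE => /andP [_ /eqP].
  move=> x y; rewrite !inE => /predU1P [-> | xA] /predU1P [-> | yA] nxy.
  - by rewrite eqxx in nxy.
  - exact: cv.
  - rewrite csym ?cv //; by rewrite eq_sym.
  - exact: mA.
exists j', A => //; split => //; by move: aA; rewrite /a' (negPf nj).
Qed.
End Gen.

Lemma widen_ord_inj n m (h : n <= m) : injective (widen_ord h).
Proof. by move=> x y /(congr1 val) /= /val_inj. Qed.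

Lemma ramsey_exists r (V : finType) (e : rel V) :
  1 < r -> irreflexive e -> exists N, ramsey_prop r e N.
Proof.
move=> r2 irr.
exists (r ^ (\sum_(i < r) #|V|)); apply/forallP => c; apply/implyP => hs.
pose cc (x y : 'I_(r ^ (\sum_(i < r) #|V|))) := c (x, y).
have csym : forall x y, x != y -> cc x y = cc y x.
  move=> x y nxy; move/forallP: hs => /(_ x) /forallP /(_ y).
  by rewrite nxy /= => /eqP.
have hT : r ^ (\sum_(i < r) #|V|) <= #|[set: 'I_(r ^ (\sum_(i < r) #|V|))]|.
  by rewrite cardsT card_ord.
have [j [A _ [mA aA]]] := @ramsey_gen _ _ cc csym r2 _ (fun _ => #|V|) setT erefl hT.
have hVA : #|V| <= #|A| by apply: ltnW.
pose f (x : V) := enum_val (widen_ord hVA (enum_rank x)).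
have finj : injective f.
  by move=> x y /enum_val_inj /widen_ord_inj /enum_rank_inj.
apply/existsP; exists j; apply/existsP; exists [ffun x => f x].
apply/andP; split.
  by apply/injectiveP => x y; rewrite !ffunE => /finj.
apply/forallP => u; apply/forallP => v; apply/implyP => euv.
rewrite !ffunE; apply/eqP; apply: mA; try exact: enum_valP.
apply/negP => /eqP /finj euv'; by rewrite euv' irr in euv.
Qed.

Lemma ramsey_mono r (V : finType) (e : rel V) n m :
  ramsey_prop r e n -> n <= m -> ramsey_prop r e m.
Proof.
move=> P nm; apply/forallP => c; apply/implyP => hs.
pose c' := [ffun p : 'I_n * 'I_n => c (widen_ord nm p.1, widen_ord nm p.2)].
have hs' : [forall x, forall y, (x != y) ==> (c' (x, y) == c' (y, x))].
  apply/forallP => x; apply/forallP => y; apply/implyP => nxy.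
  rewrite !ffunE /=; move/forallP: hs => /(_ (widen_ord nm x)) /forallP
    /(_ (widen_ord nm y)) /implyP; apply.
  apply: contra nxy => /eqP [] exy; apply/eqP/val_inj => //.
move/forallP: P => /(_ c') /implyP /(_ hs') /existsP [col /existsP [f /andP [fi fe]]].
apply/existsP; exists col; apply/existsP; exists [ffun u => widen_ord nm (f u)].
apply/andP; split.
  apply/injectiveP => x y; rewrite !ffunE => /widen_ord_inj; exact: (injectiveP _ fi).
apply/forallP => u; apply/forallP => v; apply/implyP => euv.
move/forallP: fe => /(_ u) /forallP /(_ v) /implyP /(_ euv).
by rewrite !ffunE.
Qed.

Theorem lemma4p1 (VG VH : finType) (eG : rel VG) (eH : rel VH)
  (phi : VH -> VG) :
  simple_graph eG -> simple_graph eH ->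
  subgraph_via eH eG phi -> connected_graph eH ->
  (chi eH - 1) * (ramsey 2 eH - 1) + 1 <= ramsey 3 eG.
Proof.
move=> [sG iG] [sH iH] [phii phie] [VH0 conH].
have [u0 _] := card_gt0P VH0.
set K := chi eH - 1; set M := ramsey 2 eH - 1.
have [P3 min3] := cmin_spec (@ramsey_exists 3 _ eG isT iG).
rewrite addn1 ltnNge; apply/negP => le.
have := ramsey_mono P3 le; apply/negP.
apply/negP => P.
have apP : forall c : {ffun 'I_(K * M) * 'I_(K * M) -> 'I_3},
  [forall x, forall y, (x != y) ==> (c (x, y) == c (y, x))] ->
  exists col : 'I_3, exists f : {ffun VG -> 'I_(K * M)},
   injective f /\ forall u v, eG u v -> c (f u, f v) = col.
  move=> c hs; move/forallP: P => /(_ c) /implyP /(_ hs)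
    /existsP [col /existsP [f /andP [fi fe]]].
  exists col, f; split; first exact/injectiveP.
  move=> u v euv; apply/eqP.
  by move/forallP: fe => /(_ u) /forallP /(_ v) /implyP /(_ euv).
case: (posnP (K * M)) => [NE | Npos].
  have ht : [forall x, forall y, (x != y) ==>
      (([ffun _ => ord0] : {ffun 'I_(K * M) * 'I_(K * M) -> 'I_3}) (x, y) ==
       ([ffun _ => ord0] : {ffun 'I_(K * M) * 'I_(K * M) -> 'I_3}) (y, x))].
    by apply/forallP => x; apply/forallP => y; rewrite !ffunE eqxx implybT.
  have [col [f _]] := apP _ ht.
  have := ltn_ord (f (phi u0)); move: (nat_of_ord (f (phi u0))) => k; by rewrite NE.
have Kpos : 0 < K by move: Npos; rewrite muln_gt0 => /andP [].
have Mpos : 0 < M by move: Npos; rewrite muln_gt0 => /andP [].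
have nK : ~~ k_colourable eH K by apply: cmin_lt; move: Kpos; rewrite /K /chi; lia.
have nM : ~~ ramsey_prop 2 eH M by apply: cmin_lt; move: Mpos; rewrite /M /ramsey; lia.
move: nM; rewrite negb_forall => /existsP [c0]; rewrite negb_imply.
case/andP => hs0 /existsPn nomono.
pose blk (x : 'I_(K * M)) := x %/ M.
pose pos (x : 'I_(K * M)) : 'I_M := Ordinal (ltn_pmod x Mpos).
have bp_inj : forall x y, blk x = blk y -> pos x = pos y -> x = y.
  move=> x y bxy /(congr1 val) /= pxy; apply/val_inj => /=.
  by rewrite (divn_eq x M) (divn_eq y M) -/(blk x) -/(blk y) bxy pxy.
have blt : forall x, blk x < K.
  by move=> x; rewrite /blk ltn_divLR // ltn_ord.
pose w := widen_ord (isT : 2 <= 3).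
pose c := [ffun p : 'I_(K * M) * 'I_(K * M) =>
   if blk p.1 == blk p.2 then w (c0 (pos p.1, pos p.2)) else (ord_max : 'I_3)].
have hs : [forall x, forall y, (x != y) ==> (c (x, y) == c (y, x))].
  apply/forallP => x; apply/forallP => y; apply/implyP => nxy.
  rewrite !ffunE /= [blk y == _]eq_sym.
  case: ifP => // /eqP bxy.
  have npxy : pos x != pos y.
    by apply: contra nxy => /eqP pxy; apply/eqP; apply: bp_inj.
  by move/forallP: hs0 => /(_ (pos x)) /forallP /(_ (pos y)) /implyP /(_ npxy) /eqP ->.
have [col [f [fi fe]]] := apP c hs.
pose g u := f (phi u).
have gi : injective g by move=> x y /fi /phii.
have ge : forall u v, eH u v -> c (g u, g v) = col by move=> u v /phie /fe.
case: (eqVneq col ord_max) => [colm | ncol].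
  move/negP: nK; apply; apply/existsP.
  exists [ffun u => Ordinal (blt (g u))].
  apply/forallP => u; apply/forallP => v; apply/implyP => euv.
  have := ge u v euv; rewrite !ffunE /= colm.
  case: ifP => [_ /(congr1 val) /= | /negbT nb _].
    by have := ltn_ord (c0 (pos (g u), pos (g v))) => /[swap] ->.
  by apply: contra nb => /eqP /(congr1 val) /= ->.
have col2 : col < 2.
  move: ncol; rewrite -val_eqE /=; have := ltn_ord col; lia.
pose col' : 'I_2 := Ordinal col2.
have eblk : forall u v, eH u v -> blk (g u) = blk (g v).
  move=> u v euv; have := ge u v euv; rewrite ffunE /=.
  by case: ifP => [/eqP //| _ em]; rewrite em eqxx in ncol.
have ecol : forall u v, eH u v -> c0 (pos (g u), pos (g v)) = col'.
  move=> u v euv; have := ge u v euv; rewrite ffunE /= (eblk u v euv) eqxx.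
  by move/(congr1 val) => /= h; apply/val_inj.
pose a := [pred x | blk (g x) == blk (g u0)].
have cla : closed eH a.
  by move=> x y exy; rewrite !inE (eblk x y exy).
have allb : forall u, blk (g u) = blk (g u0).
  move=> u; have := closed_connect cla (conH u0 u).
  by rewrite !inE eqxx => /esym /eqP.
have := nomono col'; apply/negP; rewrite negbK; apply/existsP.
exists [ffun u => pos (g u)]; apply/andP; split.
  apply/injectiveP => x y; rewrite !ffunE => pxy; apply: gi.
  by apply: bp_inj => //; rewrite !allb.
apply/forallP => u; apply/forallP => v; apply/implyP => euv.
by rewrite !ffunE ecol.
Qed.
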